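(* Every graph $G\in\mathcal{V}_1$ can be properly vertex colored with at most $3$ colors. Moreover, a graph $G\in\mathcal{V}_1$ can be properly vertex colored with at most $2$ colors if and only if $G$ contains no cycle of odd length.
   Context: All graphs are finite simple graphs. For a vertex $x$, $S(x)$ is the subgraph induced by the neighbors of $x$. $\mathcal{V}_1$ is the class of one-dimensional varieties, defined as follows: $G\in\mathcal{V}_1$ if every unit sphere $S(x)$ is a nonempty graph without edges (equivalently, $G$ is triangle-free and has no isolated vertices), and, writing $\sigma(G)$ for the subgraph induced by the vertices of degree at least $3$ (the singularities) and $\delta(G)$ for the subgraph induced by the vertices of degree $1$ (the boundary), both $\sigma(G)$ and $\delta(G)$ have no edges. *)

(* Defs.v *)
(* A finite simple graph is a symmetric irreflexive
   relation e : rel T on a finType T. *)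
From mathcomp Require Import all_boot.
Set Implicit Arguments. Unset Strict Implicit. Unset Printing Implicit Defensive.

Section Graphs.
Variables (T : finType) (e : rel T).

Definition nbhd (x : T) : {set T} := [set y | e x y].
Definition deg (x : T) : nat := #|nbhd x|.

Definition sphere_nonempty_edgeless (x : T) : Prop :=
  nbhd x != set0 /\ (forall y z, y \in nbhd x -> z \in nbhd x -> ~~ e y z).

Definition inV1 : Prop :=
  [/\ forall x, sphere_nonempty_edgeless x,
      (forall x y, 3 <= deg x -> 3 <= deg y -> ~~ e x y)
    &
      (forall x y, deg x = 1 -> deg y = 1 -> ~~ e x y)].

Definition proper_coloring (k : nat) (f : T -> 'I_k) : Prop :=
  forall x y, e x y -> f x != f y.

Definition colorable (k : nat) : Prop := exists f : T -> 'I_k, proper_coloring f.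

Definition is_graph_cycle (c : seq T) : Prop :=
  [/\ 3 <= size c, uniq c & cycle e c].

Definition has_odd_cycle : Prop :=
  exists c : seq T, is_graph_cycle c /\ odd (size c).

End Graphs.

(* Main.v *)
Require Import Defs.
From mathcomp Require Import all_boot zify.
Set Implicit Arguments. Unset Strict Implicit. Unset Printing Implicit Defensive.

Section P1.
Variables (T : finType) (e : rel T).
Hypothesis e_sym : symmetric e.
Hypothesis e_irr : irreflexive e.
Hypothesis Hsig : forall x y, 3 <= deg e x -> 3 <= deg e y -> ~~ e x y.

Lemma low_deg (A : {set T}) v0 : v0 \in A ->
  exists2 v, v \in A & #|[set y in A | e v y]| <= 2.
Proof.
move=> Av0.
case: (leqP #|[set y in A | e v0 y]| 2) => H0; first by exists v0.
have : [set y in A | e v0 y] != set0 by rewrite -card_gt0; apply: leq_trans H0.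
case/set0Pn => u; rewrite inE => /andP[Au evu].
case: (leqP #|[set y in A | e u y]| 2) => H1; first by exists u.
have D : forall w, 2 < #|[set y in A | e w y]| -> 3 <= deg e w.
  move=> w Hw; apply: leq_trans Hw _; apply: subset_leq_card.
  by apply/subsetP => y; rewrite !inE => /andP[].
by move: (Hsig (D _ H0) (D _ H1)); rewrite evu.
Qed.

Lemma col3_ind n (A : {set T}) : #|A| <= n ->
  exists f : T -> 'I_3, forall x y, x \in A -> y \in A -> e x y -> f x != f y.
Proof.
elim: n A => [|n IH] A HA.
  exists (fun _ => ord0) => x y Ax; move: HA; rewrite leqn0 => /eqP/cards0_eq H.
  by rewrite H inE in Ax.
case: (set_0Vmem A) => [->|[v0 Av0]].
  by exists (fun _ => ord0) => x y; rewrite inE.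
have [v Av Hv] := low_deg Av0.
have HA' : #|A :\ v| <= n.
  by move: HA; rewrite (cardsD1 v A) Av add1n ltnS.
have [f Hf] := IH _ HA'.
set N := [set y in A | e v y].
have Hc : #|f @: N| < #|[set: 'I_3]|.
  by rewrite cardsT card_ord; apply: leq_ltn_trans (leq_imset_card _ _) _; apply: leq_ltn_trans Hv _.
have : [set: 'I_3] :\: f @: N != set0.
  rewrite -card_gt0; move: Hc; rewrite (cardsD [set: 'I_3]) setTI.
  by rewrite subn_gt0.
case/set0Pn => c; rewrite !inE andbT => Hcn.
exists (fun x => if x == v then c else f x) => x y Ax Ay exy.
case: (eqVneq x v) => [xv|xv]; case: (eqVneq y v) => [yv|yv].
- by subst; rewrite e_irr in exy.
- subst x.
  apply: contra Hcn => /eqP ->; apply/imsetP; exists y => //; rewrite !inE Ay.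
  by [].
- subst y.
  apply: contra Hcn => /eqP <-; apply/imsetP; exists x => //; rewrite !inE Ax.
  by rewrite e_sym.
  by apply: Hf => //; rewrite !inE ?xv ?yv.
Qed.
End P1.

Section P2.
Variables (T : finType) (e : rel T).
Hypothesis e_sym : symmetric e.
Hypothesis e_irr : irreflexive e.

Lemma notuniq_split (s : seq T) : ~~ uniq s ->
  exists y s1 s2 s3, s = s1 ++ y :: s2 ++ y :: s3.
Proof.
elim: s => [|z s IH] //=; rewrite negb_and negbK.
case Hz: (z \in s) => /=.
  move=> _; case/splitPr: Hz => s2 s3; by exists z, [::], s2, s3.
move/IH => [y [s1 [s2 [s3 ->]]]]; by exists y, (z :: s1), s2, s3.
Qed.

Lemma odd_closed_walk n (s : seq T) : size s <= n -> cycle e s -> odd (size s) ->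
  has_odd_cycle e.
Proof.
elim: n s => [|n IH] s Hs Hc Ho; first by move: Hs Ho; rewrite leqn0 => /eqP ->.
case Hu: (uniq s).
  exists s; split => //; split => //.
  case: s Hs Hc Ho Hu => [|x [|y q]] //= _.
    by rewrite e_irr.
  case: q => //.
case/notuniq_split: (negbT Hu) => y [s1 [s2 [s3 Es]]].
have Hc' : cycle e (y :: s2 ++ y :: (s3 ++ s1)).
  rewrite -(rot_cycle (size s1)) Es rot_size_cat in Hc; by rewrite -cat1s catA -catA /= in Hc.
have Hsz : size s = (size (y :: s2)) + size (y :: (s3 ++ s1)).
  rewrite Es /= !size_cat /= size_cat /=; lia.
move: Hc'; rewrite /= rcons_cat cat_path /= rcons_path => /and3P[H1 H2 H3].
move: Ho; rewrite Hsz oddD.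
case Ha: (odd (size (y :: s2))) => /= Hb.
- apply: (IH (y :: s2)) => //; last by rewrite /= rcons_path H1.
  by move: Hs; rewrite Hsz /=; lia.
- apply: (IH (y :: (s3 ++ s1))) => //.
  by move: Hs; rewrite Hsz /=; lia. by rewrite /= rcons_path.
Qed.

Definition E : rel (T * bool) := fun u v => e u.1 v.1 && (v.2 == ~~ u.2).

Lemma E_sym : symmetric E.
Proof. by move=> [x a] [y b]; rewrite /E /= e_sym; case: a; case: b. Qed.

Lemma pathE u p : path E u p ->
  path e u.1 (map fst p) /\ (last u p).2 = u.2 (+) odd (size p).
Proof.
elim: p u => [|v p IH] u /=; first by rewrite addbF.
case/andP => /andP[H1 /eqP H2] /IH [H3 H4]; split; first by rewrite H1.
by rewrite H4 H2 /= addbN addNb.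
Qed.

Hypothesis Hno : ~ has_odd_cycle e.

Lemma noE x : ~~ connect E (x, false) (x, true).
Proof.
apply/negP => /connectP [p Hp Hl].
have [H1 H2] := pathE Hp.
rewrite -Hl /= in H2.
case/lastP: p Hl Hp H1 H2 => [|q z] //; rewrite last_rcons => <- _.
rewrite map_rcons /= size_rcons => Hpath Ho; apply: Hno.
apply: (@odd_closed_walk (size (x :: map fst q)) (x :: map fst q)) => //.
by rewrite /= size_map.
Qed.

Lemma liftE u v : connect e u v -> forall b,
  connect E (u, b) (v, true) || connect E (u, b) (v, false).
Proof.
case/connectP => p; elim: p u => [|w p IH] u /=.
  by move=> _ -> [|]; rewrite connect0 ?orbT.
case/andP => euw Hp Hl b.
have Es : E (u, b) (w, ~~ b) by rewrite /E /= euw eqxx.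
case/orP: (IH _ Hp Hl (~~ b)) => H.
  by rewrite (connect_trans (connect1 Es) H).
by rewrite (connect_trans (connect1 Es) H) orbT.
Qed.

Lemma col2 : colorable e 2.
Proof.
pose c x := connect E (root e x, false) (x, true).
exists (fun x => if c x then ord0 else ord_max) => x y exy.
have Hs := sym_connect_sym e_sym.
have Er : root e x = root e y by apply/(rootP Hs); exact: connect1.
have rx : connect e (root e x) x by rewrite Hs connect_root.
have Hsym := sym_connect_sym E_sym.
suff : c x != c y by case: (c x); case: (c y).
rewrite /c -Er; set r := root e x.
have Exy b : E (x, b) (y, ~~ b) by rewrite /E /= exy eqxx.
case Hx: (connect E (r, false) (x, true)); case Hy: (connect E (r, false) (y, true)) => //.
  have H1 := connect_trans Hx (connect1 (Exy true)).
  move: (noE y); rewrite (connect_trans _ Hy) //. by rewrite Hsym.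
have := liftE rx false; rewrite Hx /= => H.
by move: (connect_trans H (connect1 (Exy false))); rewrite Hy.
Qed.
End P2.

Lemma col2_noodd (T : finType) (e : rel T) : colorable e 2 -> ~ has_odd_cycle e.
Proof.
case=> f Hf [s [[Hs Hu Hc] Ho]].
pose b x := f x == ord0.
have Hb x y : e x y -> b y = ~~ b x.
  move/Hf; rewrite /b; case: (f x) => [[|[|?]] ?] //; case: (f y) => [[|[|?]] ?] //.
have Hp x p : path e x p -> b (last x p) = b x (+) odd (size p).
  elim: p x => [|z p IH] x /=; first by rewrite addbF.
  case/andP => /Hb H1 /IH ->; by rewrite H1 addNb addbN.
case: s Hs Hu Hc Ho => [|x q] // _ _ /= /Hp; rewrite last_rcons size_rcons /=.
by case: (b x); case: (odd (size q)).
Qed.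

Theorem mainTheorem15 (T : finType) (e : rel T)
  (e_sym : symmetric e) (e_irr : irreflexive e) (HG : inV1 e) :
  colorable e 3 /\ (colorable e 2 <-> ~ has_odd_cycle e).
Proof.
case: HG => _ Hsig _.
split.
  have [f Hf] := @col3_ind T e e_sym e_irr Hsig #|[set: T]| [set: T] (leqnn _).
  by exists f => x y; apply: Hf; rewrite inE.
split; first exact: col2_noodd.
exact: col2 e_sym e_irr.
Qed.
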